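(* Let $X\in\mathbb{R}^{m\times n}$, $\lambda>0$, and let $f:\mathbb{R}^{m\times n}\to\mathbb{R}$ be an arbitrary function. Consider the original R-PCA problem $$\min_{A,E\in\mathbb{R}^{m\times n}} \operatorname{rank}(A)+\lambda f(E)\quad\text{s.t.}\quad X=A+E, \tag{P}$$ and the relaxed R-LatLRR problem $$\min_{Z\in\mathbb{R}^{n\times n},\,L\in\mathbb{R}^{m\times m},\,E\in\mathbb{R}^{m\times n}} \|Z\|_*+\|L\|_*+\lambda f(E)\quad\text{s.t.}\quad X-E=(X-E)Z+L(X-E). \tag{U}$$ (i) Let $(A^*,E^* )$ be any optimal solution of (P), let $r=\operatorname{rank}(A^* )$, and let $A^*=U_{A^*}\Sigma_{A^*}V_{A^*}^T$ be its skinny SVD. Let $\widehat W\in\mathbb{R}^{r\times r}$ be any matrix such that (a) $\widehat W$ is block diagonal with blocks compatible with $\Sigma_{A^*}$, i.e., $[\Sigma_{A^*}]_{ii}\neq[\Sigma_{A^*}]_{jj}$ implies $\widehat W_{ij}=0$; and (b) both $\widehat W$ and $I-\widehat W$ are positive semi-definite. Then $(Z^*,L^*,E^* )$ is a minimizer of (U), where $$Z^*=V_{A^*}\widehat WV_{A^*}^T,\qquad L^*=U_{A^*}(I-\widehat W)U_{A^*}^T.$$ (ii) Conversely, if $(Z^*,L^*,E^* )$ is any optimal solution of (U), then $(X-E^*,E^* )$ is a minimizer of (P).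
   Context: $\|\cdot\|_*$ denotes the nuclear norm (sum of singular values). The skinny SVD of a matrix $A$ of rank $r$ is $A=U_A\Sigma_AV_A^T$ with $U_A,V_A$ having $r$ orthonormal columns and $\Sigma_A$ an $r\times r$ diagonal matrix with positive diagonal entries. $I$ denotes the identity matrix of the appropriate size. *)

(* Defs.v *)
(* Real matrices are modelled over an arbitrary real closed field R. *)
From HB Require Import structures.
From mathcomp Require Import all_boot all_order all_algebra.
From Stdlib Require Import ClassicalEpsilon.
Set Implicit Arguments. Unset Strict Implicit. Unset Printing Implicit Defensive.
Import Order.TTheory GRing.Theory Num.Theory.
Local Open Scope ring_scope.

Definition is_skinny_svd (R : rcfType) (m n k : nat) (A : 'M[R]_(m, n))
  (U : 'M[R]_(m, k)) (s : 'rV[R]_k) (V : 'M[R]_(n, k)) : Prop :=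
  [/\ U^T *m U = 1%:M, V^T *m V = 1%:M, (forall i, 0 < s 0 i)
    & A = U *m diag_mx s *m V^T].

Definition is_nuclear_norm (R : rcfType) (m n : nat) (A : 'M[R]_(m, n)) (t : R) : Prop :=
  exists k (U : 'M[R]_(m, k)) (s : 'rV[R]_k) (V : 'M[R]_(n, k)),
    is_skinny_svd A U s V /\ t = \sum_(i < k) s 0 i.

Definition nucnorm (R : rcfType) (m n : nat) (A : 'M[R]_(m, n)) : R :=
  epsilon (inhabits 0) (is_nuclear_norm A).

Definition psd (R : rcfType) (r : nat) (W : 'M[R]_r) : Prop :=
  W^T = W /\ forall x : 'cV[R]_r, 0 <= (x^T *m W *m x) 0 0.

Definition objP (R : rcfType) (m n : nat) (lam : R) (f : 'M[R]_(m, n) -> R)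
  (A E : 'M[R]_(m, n)) : R := (\rank A)%:R + lam * f E.

Definition minimizer_P (R : rcfType) (m n : nat) (X : 'M[R]_(m, n)) (lam : R)
  (f : 'M[R]_(m, n) -> R) (A E : 'M[R]_(m, n)) : Prop :=
  X = A + E /\
  forall A' E' : 'M[R]_(m, n), X = A' + E' -> objP lam f A E <= objP lam f A' E'.

Definition feasU (R : rcfType) (m n : nat) (X : 'M[R]_(m, n))
  (Z : 'M[R]_n) (L : 'M[R]_m) (E : 'M[R]_(m, n)) : Prop :=
  X - E = (X - E) *m Z + L *m (X - E).

Definition objU (R : rcfType) (m n : nat) (lam : R) (f : 'M[R]_(m, n) -> R)
  (Z : 'M[R]_n) (L : 'M[R]_m) (E : 'M[R]_(m, n)) : R :=
  nucnorm Z + nucnorm L + lam * f E.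

Definition minimizer_U (R : rcfType) (m n : nat) (X : 'M[R]_(m, n)) (lam : R)
  (f : 'M[R]_(m, n) -> R) (Z : 'M[R]_n) (L : 'M[R]_m) (E : 'M[R]_(m, n)) : Prop :=
  feasU X Z L E /\
  forall (Z' : 'M[R]_n) (L' : 'M[R]_m) (E' : 'M[R]_(m, n)),
    feasU X Z' L' E' -> objU lam f Z L E <= objU lam f Z' L' E'.

(* Main.v *)
Require Import Defs.
From HB Require Import structures.
From mathcomp Require Import all_boot all_order all_algebra.
From mathcomp Require Import complex ring lra.
From Stdlib Require Import ClassicalEpsilon.
Import Order.TTheory GRing.Theory Num.Theory.
Local Open Scope ring_scope.

Module Aux.
Set Implicit Arguments. Unset Strict Implicit.
Section Aux.
Variable R : rcfType.
Implicit Types n : nat.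

Lemma rv_sq n (v : 'rV[R]_n) : (v *m v^T) 0 0 = \sum_j v 0 j ^+ 2.
Proof. by rewrite mxE; apply: eq_bigr => j _; rewrite mxE expr2. Qed.

Lemma rv_sq_ge0 n (v : 'rV[R]_n) : 0 <= (v *m v^T) 0 0.
Proof. by rewrite rv_sq; apply: sumr_ge0 => j _; apply: sqr_ge0. Qed.

Lemma rv_sq_eq0 n (v : 'rV[R]_n) : (v *m v^T) 0 0 = 0 -> v = 0.
Proof.
rewrite rv_sq => /eqP; rewrite psumr_eq0 => [/allP H|j _]; last exact: sqr_ge0.
apply/rowP=> j; rewrite mxE; have := H j (mem_index_enum j).
by rewrite /= sqrf_eq0 => /eqP.
Qed.

Lemma householder n (u : 'rV[R]_n.+1) : (u *m u^T) 0 0 = 1 ->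
  exists H : 'M_n.+1, [/\ H^T = H, H *m H = 1%:M & delta_mx 0 0 *m H = u].
Proof.
move=> uu.
set e0 : 'rV[R]_n.+1 := delta_mx 0 0.
set w := e0 - u; set c := (w *m w^T) 0 0; set P := w^T *m w.
set k := 2 / c.
have wwc : w *m w^T = c%:M by rewrite [LHS]mx11_scalar.
have PP : P *m P = c *: P.
  by rewrite /P mulmxA -(mulmxA _ w) wwc mul_mx_scalar scalemxAl.
have e0e0 : e0 *m e0^T = 1%:M.
  by rewrite [LHS]mx11_scalar mxE (bigD1 0) //= big1 => [|j jn];
    rewrite !mxE ?eqxx ?(negPf jn) ?mulr1 ?addr0 ?mulr0.
have e0u : e0 *m u^T = (u 0 0)%:M.
  rewrite [LHS]mx11_scalar mxE (bigD1 0) //= big1 => [|j jn]; rewrite !mxE ?eqxx ?(negPf jn) ?mul1r ?addr0 //.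
  by rewrite mul0r.
have ue0 : u *m e0^T = (u 0 0)%:M.
  by rewrite -[u *m _]trmxK trmx_mul trmxK e0u tr_scalar_mx.
have uu' : u *m u^T = 1%:M by rewrite [LHS]mx11_scalar uu.
have cw : c = 2 * w 0 0.
  rewrite /c /w linearB /= mulmxBl !mulmxBr e0e0 uu' e0u ue0 !mxE eqxx /=.
  ring.
have e0w : e0 *m w^T = (w 0 0)%:M.
  rewrite /w linearB /= mulmxBr e0e0 e0u [RHS]mx11_scalar !mxE eqxx /=.
  by rewrite raddfB.
exists (1%:M - k *: P); split.
- by rewrite linearB /= tr_scalar_mx linearZ /= /P trmx_mul trmxK.
- have [c0|cn0] := eqVneq c 0.
    by rewrite /k c0 invr0 mulr0 scale0r subr0 mulmx1.
  rewrite mulmxBl !mulmxBr mul1mx mulmx1 -scalemxAl mul1mx -scalemxAr PP !scalerA.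
  have -> : k * k * c = k + k by rewrite /k; field.
  by rewrite scalerDl opprB addrK subrK.
- have [c0|cn0] := eqVneq c 0.
    rewrite /k c0 invr0 mulr0 scale0r subr0 mulmx1.
    by have := @rv_sq_eq0 _ w c0; rewrite /w => /eqP; rewrite subr_eq0 => /eqP.
  rewrite -/e0 mulmxBr mulmx1 -scalemxAr /P mulmxA e0w mul_scalar_mx scalerA.
  have -> : k * w 0 0 = 1.
    by move: cn0; rewrite /k cw => cn0; field; move: cn0; rewrite mulf_eq0 negb_or => /andP[].
  by rewrite scale1r /w opprB addrC subrK.
Qed.
Lemma real_eig n (M : 'M[R]_n.+1) : M^T = M ->
  exists a (v : 'rV_n.+1), v *m M = a *: v /\ v != 0.
Proof.
move=> Msym.
pose MC := map_mx (real_complex R) M.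
have herm : MC \is hermsymmx.
  apply: realsym_hermsym.
    by rewrite qualifE /= expr0 scale1r map_mx_id // /MC map_trmx Msym.
  by apply/mxOverP=> i j; rewrite mxE complex_real.
have /orthomx_spectralP eqM := hermitian_normalmx herm.
have dreal := hermitian_spectral_diag_real herm.
set P := spectralmx MC in eqM.
set d := spectral_diag MC in eqM dreal.
have Pu : P \in unitmx by apply: spectral_unit.
have ev : eigenvalue MC (d 0 0).
  apply/eigenvalueP; exists (row 0 P).
    rewrite rowE -mulmxA {1}eqM !mulmxA (mulmxK Pu).
    rewrite scalemxAl; congr (_ *m P); apply/rowP=> j.
    rewrite mul_mx_diag !mxE eqxx /=.
    by case: (eqVneq j 0) => [->|jn]; rewrite ?mul1r ?mulr1 // mul0r mulr0.
  apply/eqP=> r0.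
  have : ('e_0 : 'rV[R[i]]_n.+1) = 0.
    by rewrite -(mulmxK Pu 'e_0) -rowE r0 mul0mx.
  by move/rowP/(_ 0); rewrite !mxE eqxx /= => /eqP; rewrite oner_eq0.
have := mxOverP dreal 0 0.
case E: (d 0 0) => [a b]; rewrite complex_real => /eqP b0.
move: ev; rewrite E b0 complexr0 eigenvalue_root_char -map_char_poly fmorph_root.
rewrite -eigenvalue_root_char => /eigenvalueP [v vM vn0].
by exists a, v.
Qed.

Lemma e0_row n : (delta_mx 0 0 : 'rV[R]_(1 + n)) = row_mx 1%:M 0.
Proof.
apply/rowP=> j; rewrite !mxE; case: splitP => j' Hj; rewrite !mxE.
  by rewrite ord1 eqxx; have -> : j = 0 by apply: val_inj; rewrite /= Hj ord1.
by have -> : (j == 0) = false by apply/negP => /eqP E; move: Hj; rewrite E.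
Qed.

Lemma diag11 (a : R) : diag_mx (a%:M : 'rV_1) = a%:M.
Proof. by apply/matrixP=> i j; rewrite !ord1 !mxE. Qed.

Lemma spectral n (M : 'M[R]_n) : M^T = M ->
  exists (Q : 'M_n) (d : 'rV_n), Q^T *m Q = 1%:M /\ M = Q *m diag_mx d *m Q^T.
Proof.
elim: n M => [|n IH] M Msym.
  by exists 1%:M, 0; split; rewrite [LHS]flatmx0 [RHS]flatmx0.
have [a [v [vM vn0]]] := @real_eig _ M Msym.
set s := (v *m v^T) 0 0.
have s0 : 0 < s.
  rewrite lt0r rv_sq_ge0 andbT; apply/eqP => s0; move: vn0.
  by rewrite (@rv_sq_eq0 _ v s0) eqxx.
set u := (Num.sqrt s)^-1 *: v.
have uu : (u *m u^T) 0 0 = 1.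
  have sc : forall k (A : 'M[R]_1), (k *: A) 0 0 = k * A 0 0 by move=> ? ?; rewrite mxE.
  rewrite /u linearZ /= -scalemxAl -scalemxAr !sc -/s.
  have sq := sqr_sqrtr (ltW s0); have sn : Num.sqrt s != 0 by rewrite sqrtr_eq0 -ltNge.
  by rewrite -{3}sq; field.
have [H [Hs HH e0H]] := @householder _ u uu.
have uM : u *m M = a *: u by rewrite -scalemxAl vM scalerA mulrC -scalerA.
pose B : 'M_(1 + n) := H *m M *m H.
have e0B : (delta_mx 0 0 : 'rV[R]_(1 + n)) *m B = a *: delta_mx 0 0.
  rewrite /B !mulmxA e0H uM -scalemxAl -e0H -mulmxA HH mulmx1 //.
have Bsym : B^T = B by rewrite /B !trmx_mul Hs Msym mulmxA.
have MB : M = H *m B *m H by rewrite /B !mulmxA HH mul1mx -mulmxA HH mulmx1.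
move: e0B Bsym MB; rewrite -(submxK B) e0_row.
set ul := ulsubmx B; set ur := ursubmx B; set dl := dlsubmx B; set dr := drsubmx B.
rewrite mul_row_block !mul1mx !mul0mx !addr0 (scale_row_mx a (1%:M : 'M[R]_1) (0 : 'rV[R]_n)) scaler0.
move=> /eq_row_mx [ula ur0]; rewrite tr_block_mx => /eq_block_mx [_ dlur _ drs] MB.
have [Q' [d' [Q'o eqdr]]] := IH dr drs.
pose K : 'M_(1 + n) := block_mx 1%:M 0 0 Q'.
have KK : K^T *m K = 1%:M.
  rewrite /K tr_block_mx mulmx_block.
  by rewrite !trmx0 !trmx1 Q'o !mulmx0 !mul0mx !mulmx1 !addr0 !add0r -scalar_mx_block.
have KD : K *m diag_mx (row_mx (a%:M) d') *m K^T = block_mx ul ur dl dr.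
  rewrite diag_mx_row diag11 /K tr_block_mx !trmx0 !trmx1 !mulmx_block.
  have dl0 : dl = 0 by rewrite -[dl]trmxK dlur ur0 trmx0.
  by rewrite !mulmx0 !mul0mx !mulmx1 !mul1mx !addr0 !add0r mul0mx dl0 ur0 ula scalemx1 eqdr.
exists (H *m K), (row_mx (a%:M) d'); split.
  by rewrite trmx_mul mulmxA -(mulmxA K^T) Hs HH mulmx1 KK.
by rewrite MB trmx_mul Hs !mulmxA -KD !mulmxA.
Qed.
End Aux.
Section SVD.
Variable R : rcfType.
Implicit Types m n k : nat.

Lemma tmx_sq m n (X : 'M[R]_(m, n)) i : (X^T *m X) i i = \sum_l X l i ^+ 2.
Proof. by rewrite mxE; apply: eq_bigr => l _; rewrite mxE expr2. Qed.

Lemma tmx_sq_ge0 m n (X : 'M[R]_(m, n)) i : 0 <= (X^T *m X) i i.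
Proof. by rewrite tmx_sq; apply: sumr_ge0 => l _; apply: sqr_ge0. Qed.

Lemma tmx_sq_eq0 m n (X : 'M[R]_(m, n)) i : (X^T *m X) i i = 0 -> forall l, X l i = 0.
Proof.
rewrite tmx_sq => /eqP; rewrite psumr_eq0 => [/allP H l|j _]; last exact: sqr_ge0.
by have := H l (mem_index_enum l); rewrite /= sqrf_eq0 => /eqP.
Qed.

Lemma mxdiag_e m n (A : 'M[R]_(m, n)) d i j : (A *m diag_mx d) i j = A i j * d 0 j.
Proof. by rewrite mul_mx_diag mxE. Qed.
Lemma diagmx_e m n (A : 'M[R]_(m, n)) d i j : (diag_mx d *m A) i j = d 0 i * A i j.
Proof. by rewrite mul_diag_mx mxE. Qed.

Section Sel.
Variables (n : nat) (J : {pred 'I_n}).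
Local Notation k := #|J|.
Definition selmx : 'M[R]_(n, k) := \matrix_(i, j) (i == enum_val j)%:R.

Lemma selmx_l p (X : 'M[R]_(n, p)) j c : (selmx^T *m X) j c = X (enum_val j) c.
Proof.
rewrite mxE (bigD1 (enum_val j)) //= big1 => [|i /negPf ne]; rewrite !mxE ?eqxx ?ne.
  by rewrite mul1r addr0.
by rewrite mul0r.
Qed.

Lemma selmx_r p (X : 'M[R]_(p, n)) r j : (X *m selmx) r j = X r (enum_val j).
Proof.
rewrite -[X *m _]trmxK trmx_mul mxE selmx_l mxE //.
Qed.

Lemma selmxTselmx : selmx^T *m selmx = 1%:M.
Proof.
apply/matrixP=> i j; rewrite selmx_l !mxE.
by rewrite (inj_eq enum_val_inj).
Qed.

Lemma selmx_rr p (X : 'M[R]_(p, n)) r i :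
  (X *m selmx *m selmx^T) r i = if i \in J then X r i else 0.
Proof.
rewrite mxE.
under eq_bigr => j _ do rewrite selmx_r !mxE.
rewrite -(big_enum_val (fun x => X r x * (i == x)%:R)) /=.
case: ifP => iJ.
  rewrite (bigD1 i) //= eqxx mulr1 big1 ?addr0 // => x /andP[_ /negPf]; rewrite eq_sym => ->.
  by rewrite mulr0.
rewrite big1 // => x xJ; have -> : (i == x) = false by apply/eqP => E; move: iJ; rewrite E xJ.
by rewrite mulr0.
Qed.
End Sel.

Lemma svd_exists m n (A : 'M[R]_(m, n)) :
  exists k (U : 'M_(m, k)) (s : 'rV_k) (V : 'M_(n, k)), is_skinny_svd A U s V.
Proof.
have AAs : (A^T *m A)^T = A^T *m A by rewrite trmx_mul trmxK.
have [Q [d [Qo eq]]] := @spectral _ _ (A^T *m A) AAs.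
have QQ : Q *m Q^T = 1%:M by apply: mulmx1C.
set AQ := A *m Q.
have AQd : AQ^T *m AQ = diag_mx d.
  by rewrite /AQ trmx_mul -mulmxA (mulmxA A^T) eq !mulmxA Qo mul1mx -mulmxA Qo mulmx1.
have d0 i : 0 <= d 0 i by have := tmx_sq_ge0 AQ i; rewrite AQd mxE eqxx.
pose J := [pred i : 'I_n | d 0 i != 0].
pose S := selmx J.
pose e := @enum_val _ J.
pose s : 'rV_#|J| := \row_j Num.sqrt (d 0 (e j)).
have spos j : 0 < s 0 j.
  rewrite mxE sqrtr_gt0 lt0r d0 andbT; exact: (enum_valP j).
pose V := Q *m S.
pose si : 'rV_#|J| := \row_j (s 0 j)^-1.
exists #|J|, (A *m V *m diag_mx si), s, V; split.
- have VAAV : V^T *m (A^T *m A) *m V = S^T *m diag_mx d *m S.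
    rewrite /V trmx_mul eq !mulmxA -[S^T *m Q^T *m Q]mulmxA Qo mulmx1 -[S^T *m diag_mx d *m Q^T *m Q]mulmxA Qo mulmx1 //.
  have -> : (A *m V *m diag_mx si)^T *m (A *m V *m diag_mx si) =
      diag_mx si *m (V^T *m (A^T *m A) *m V) *m diag_mx si.
    by rewrite !trmx_mul tr_diag_mx !mulmxA.
  rewrite VAAV; apply/matrixP=> j j'.
  rewrite mxdiag_e diagmx_e selmx_r selmx_l !mxE (inj_eq enum_val_inj).
  have [<-|ne] := eqVneq j j'; last by rewrite mulr0 mul0r.
  have sj := spos j; move: sj; rewrite !mxE /= => sj.
  move: sj; set t := Num.sqrt _ => sj.
  have ht : d 0 (e j) = t ^+ 2 by rewrite sqr_sqrtr ?d0.
  rewrite [d 0 _]ht mulr1n.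
  by field; rewrite gt_eqF.
- by rewrite /V trmx_mul mulmxA -(mulmxA S^T) Qo mulmx1 selmxTselmx.
- exact: spos.
- have sis : diag_mx si *m diag_mx s = 1%:M.
    apply/matrixP=> i j; rewrite diagmx_e !mxE.
    have si0 : 0 < Num.sqrt (d 0 (e i)) by have := spos i; rewrite mxE.
    case: (eqVneq i j) => [Eij|ne]; last by rewrite !mulr0n mulr0.
    by rewrite mulr1n mulVf // gt_eqF.
  have AQS : AQ *m S *m S^T = AQ.
    apply/matrixP=> l i; rewrite selmx_rr; case: ifP => // /negbFE /eqP di.
    by apply/esym/(tmx_sq_eq0 (X := AQ)); rewrite AQd mxE eqxx di.
  rewrite -(mulmxA _ (diag_mx si)) sis mulmx1 /V trmx_mul !mulmxA -/AQ AQS.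
  by rewrite /AQ -mulmxA QQ mulmx1.
Qed.
End SVD.
Section Nuc.
Variable R : rcfType.

Lemma contr p k j (P : 'M[R]_(p, k)) (V : 'M[R]_(p, j)) i :
  P^T *m P = 1%:M -> V^T *m V = 1%:M -> ((V^T *m P)^T *m (V^T *m P)) i i <= 1.
Proof.
move=> PP VV.
pose G := (1%:M - V *m V^T) *m P.
have GG : G^T *m G = 1%:M - (V^T *m P)^T *m (V^T *m P).
  have Pj : (1%:M - V *m V^T)^T *m (1%:M - V *m V^T) = 1%:M - V *m V^T.
    rewrite [(_ - _)^T]linearB /= trmx1 trmx_mul trmxK mulmxBl mul1mx mulmxBr mulmx1.
    by rewrite mulmxA -(mulmxA V) VV mulmx1 subrr subr0.
  rewrite /G trmx_mul -mulmxA (mulmxA (1%:M - V *m V^T)^T) Pj mulmxBl mul1mx mulmxBr PP.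
  by rewrite trmx_mul trmxK !mulmxA.
have := tmx_sq_ge0 G i; rewrite GG !mxE eqxx /= subr_ge0 //.
Qed.

Lemma cross j k (a b : 'M[R]_(j, k)) i :
  (b^T *m a) i i <= ((a^T *m a) i i + (b^T *m b) i i) / 2.
Proof.
have := tmx_sq_ge0 (a - b) i; rewrite !tmx_sq mxE.
have -> : \sum_(l < j) (a - b) l i ^+ 2 =
    \sum_(l < j) a l i ^+ 2 + \sum_(l < j) b l i ^+ 2 - 2 * \sum_(l < j) (b^T i l * a l i).
  rewrite mulr_sumr -big_split -sumrB /=; apply: eq_bigr => l _.
  by rewrite !mxE; ring.
move=> h; rewrite ler_pdivlMr //; move: h; rewrite subr_ge0; lra.
Qed.

Lemma tr_bound p q k j (P : 'M[R]_(p, k)) (Q : 'M[R]_(q, k)) (d : 'rV[R]_k)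
  (V1 : 'M[R]_(p, j)) (V2 : 'M[R]_(q, j)) :
  P^T *m P = 1%:M -> Q^T *m Q = 1%:M -> (forall i, 0 <= d 0 i) ->
  V1^T *m V1 = 1%:M -> V2^T *m V2 = 1%:M ->
  \tr (V1^T *m (P *m diag_mx d *m Q^T) *m V2) <= \sum_i d 0 i.
Proof.
move=> PP QQ d0 VV1 VV2.
set a := V1^T *m P; set b := V2^T *m Q.
have -> : V1^T *m (P *m diag_mx d *m Q^T) *m V2 = a *m (diag_mx d *m b^T).
  by rewrite /a /b trmx_mul trmxK !mulmxA.
rewrite mxtrace_mulC /mxtrace; apply: ler_sum => i _.
rewrite -mulmxA diagmx_e.
have ba : (b^T *m a) i i <= 1.
  apply: (le_trans (cross a b i)).
  have := contr i PP VV1; have := contr i QQ VV2; rewrite -/a -/b => h1 h2.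
  rewrite ler_pdivrMr //; lra.
by rewrite -[X in _ <= X]mulr1 ler_wpM2l.
Qed.
End Nuc.
Section Nuc2.
Variable R : rcfType.

Lemma svd_tr p q k (Z : 'M[R]_(p, q)) (U : 'M_(p, k)) s V : is_skinny_svd Z U s V ->
  U^T *m Z *m V = diag_mx s.
Proof.
case=> UU VV _ ->.
by rewrite !mulmxA UU mul1mx -mulmxA VV mulmx1.
Qed.

Lemma nuc_eq p q k (Z : 'M[R]_(p, q)) (U : 'M_(p, k)) s V :
  is_skinny_svd Z U s V -> nucnorm Z = \sum_i s 0 i.
Proof.
move=> sv.
have ex : exists t, is_nuclear_norm Z t by exists (\sum_i s 0 i), k, U, s, V.
rewrite /nucnorm. have [k' [U' [s' [V' [sv' ->]]]]] := epsilon_spec (inhabits 0) _ ex.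
have tr1 := svd_tr sv; have tr2 := svd_tr sv'.
case: sv => UU VV sp eZ; case: sv' => UU' VV' sp' eZ'.
apply/le_anti/andP; split.
  rewrite -mxtrace_diag -tr2 eZ; apply: tr_bound => // i; exact: ltW.
rewrite -mxtrace_diag -tr1 eZ'; apply: tr_bound => // i; exact: ltW.
Qed.

Lemma nuc_spec p q (Z : 'M[R]_(p, q)) : exists k (U : 'M_(p, k)) s V,
  is_skinny_svd Z U s V /\ nucnorm Z = \sum_i s 0 i.
Proof.
have [k [U [s [V sv]]]] := svd_exists Z.
by exists k, U, s, V; split => //; apply: nuc_eq sv.
Qed.

Lemma svd_rank p q k (Z : 'M[R]_(p, q)) (U : 'M_(p, k)) s V :
  is_skinny_svd Z U s V -> \rank Z = k.
Proof.
move=> sv; have tr := svd_tr sv; case: sv => UU VV sp eZ.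
apply/eqP; rewrite eqn_leq; apply/andP; split.
  by rewrite eZ -mulmxA (leq_trans (mxrankM_maxl _ _)) // rank_leq_col.
pose si : 'rV_k := \row_j (s 0 j)^-1.
have ss : diag_mx s *m diag_mx si = 1%:M.
  apply/matrixP=> i j; rewrite diagmx_e !mxE.
  case: (eqVneq i j) => [_|ne]; last by rewrite !mulr0n mulr0.
  by rewrite mulr1n mulfV // gt_eqF.
rewrite -{1}(mxrank1 R k) -ss (leq_trans (mxrankM_maxl _ _)) // -tr.
by rewrite (leq_trans (mxrankM_maxl _ _)) // mxrankM_maxr.
Qed.

Lemma nuc_psd_bound p r (V : 'M[R]_(p, r)) (W : 'M[R]_r) :
  V^T *m V = 1%:M -> psd W -> nucnorm (V *m W *m V^T) <= \tr W.
Proof.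
move=> VV [Ws Wp].
have [G [mu [GG eW]]] := spectral Ws.
have mu0 i : 0 <= mu 0 i.
  have := Wp (col i G); rewrite colE trmx_mul !mulmxA.
  have -> : (delta_mx i 0 : 'cV[R]_r)^T = delta_mx 0 i by rewrite trmx_delta.
  rewrite eW -!mulmxA (mulmxA G^T G) GG mul1mx (mulmxA G^T G) GG mul1mx.
  by rewrite mulmxA -rowE -colE !mxE eqxx mulr1n.
have [k [U [s [V' [sv ->]]]]] := nuc_spec (V *m W *m V^T).
have VG : (V *m G)^T *m (V *m G) = 1%:M.
  by rewrite trmx_mul mulmxA -(mulmxA G^T) VV mulmx1 GG.
have -> : \tr W = \sum_i mu 0 i.
  by rewrite eW mxtrace_mulC mulmxA GG mul1mx mxtrace_diag.
rewrite -(mxtrace_diag s) -(svd_tr sv).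
have -> : V *m W *m V^T = V *m G *m diag_mx mu *m (V *m G)^T.
  by rewrite eW trmx_mul !mulmxA.
case: sv => UU VV' _ _.
exact: tr_bound.
Qed.
End Nuc2.
Section Main.
Variable R : rcfType.

Lemma main_ineq m n (A : 'M[R]_(m, n)) (Z : 'M_n) (L : 'M_m) :
  A = A *m Z + L *m A -> (\rank A)%:R <= nucnorm Z + nucnorm L.
Proof.
move=> eqA.
have [k [U [s [V sv]]]] := svd_exists A.
have rk := svd_rank sv; have tr := svd_tr sv; case: sv => UU VV sp eA.
have [kz [Uz [sz [Vz [svz ->]]]]] := nuc_spec Z.
have [kl [Ul [sl [Vl [svl ->]]]]] := nuc_spec L.
have key : diag_mx s = diag_mx s *m (V^T *m Z *m V) + (U^T *m L *m U) *m diag_mx s.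
  rewrite -{1}tr {1}eqA mulmxDr mulmxDl; congr (_ + _).
    by rewrite eA !mulmxA UU mul1mx.
  by rewrite eA !mulmxA -[_ *m V^T *m V]mulmxA VV mulmx1.
have tZ : \tr (V^T *m Z *m V) <= \sum_i sz 0 i.
  case: svz => UU' VV' sp' ->; apply: tr_bound => // i; exact: ltW.
have tL : \tr (U^T *m L *m U) <= \sum_i sl 0 i.
  case: svl => UU' VV' sp' ->; apply: tr_bound => // i; exact: ltW.
have ke : (k%:R : R) = \tr (V^T *m Z *m V) + \tr (U^T *m L *m U).
  rewrite /mxtrace -big_split /= -[k in k%:R]card_ord -sumr_const.
  apply: eq_bigr => i _.
  have := congr1 (fun M : 'M[R]_k => M i i) key; rewrite /= mxE eqxx mulr1n mxE diagmx_e mxdiag_e.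
  move=> h; have sn : s 0 i != 0 by rewrite gt_eqF.
  apply: (mulfI sn); rewrite mulr1 {1}h; ring.
by rewrite rk ke; lra.
Qed.
End Main.

End Aux.
Import Aux.

Theorem theorem4 (R : rcfType) (m n : nat) (X : 'M[R]_(m, n)) (lam : R)
  (f : 'M[R]_(m, n) -> R) (hlam : 0 < lam) :
  (* (i) *)
  (forall (Astar Estar : 'M[R]_(m, n)), minimizer_P X lam f Astar Estar ->
   forall (r : nat) (U : 'M[R]_(m, r)) (s : 'rV[R]_r) (V : 'M[R]_(n, r)),
     r = \rank Astar -> is_skinny_svd Astar U s V ->
   forall W : 'M[R]_r,
     (forall i j : 'I_r, s 0 i != s 0 j -> W i j = 0) ->
     psd W -> psd (1%:M - W) ->
     minimizer_U X lam f (V *m W *m V^T) (U *m (1%:M - W) *m U^T) Estar)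
  /\
  (* (ii) *)
  (forall (Z : 'M[R]_n) (L : 'M[R]_m) (E : 'M[R]_(m, n)),
     minimizer_U X lam f Z L E -> minimizer_P X lam f (X - E) E).
Proof.
split.
- move=> As Es [XAE Amin] r U s V rr sv W Wblk Wpsd IWpsd.
  have [UU VV sp eA] := sv.
  have XE : X - Es = As by rewrite XAE addrK.
  have SW : diag_mx s *m W = W *m diag_mx s.
    apply/matrixP => i j; rewrite diagmx_e mxdiag_e.
    case: (eqVneq (s 0 i) (s 0 j)) => [->|ne]; first by rewrite mulrC.
    by rewrite Wblk // mulr0 mul0r.
  have feas : feasU X (V *m W *m V^T) (U *m (1%:M - W) *m U^T) Es.
    rewrite /feasU XE {2 3}eA.
    have e1 : U *m diag_mx s *m V^T *m (V *m W *m V^T) = U *m (diag_mx s *m W) *m V^T.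
      by rewrite !mulmxA -[_ *m V^T *m V]mulmxA VV mulmx1.
    have e2 : U *m (1%:M - W) *m U^T *m (U *m diag_mx s *m V^T) =
        U *m ((1%:M - W) *m diag_mx s) *m V^T.
      by rewrite !mulmxA -[_ *m U^T *m U]mulmxA UU mulmx1.
    rewrite e1 e2 -mulmxDl -mulmxDr SW mulmxBl mul1mx addrC subrK.
    by [].
  split => // Z' L' E' feas'.
  rewrite /objU.
  have b1 := nuc_psd_bound VV Wpsd.
  have b2 := nuc_psd_bound UU IWpsd.
  have tr1 : \tr W + \tr (1%:M - W) = r%:R.
    by rewrite [\tr (_ - _)]linearB /= mxtrace1 addrC subrK.
  have mi := main_ineq feas'.
  have := Amin (X - E') E' (esym (subrK _ _)); rewrite /objP -rr.
  lra.
- move=> Z L E [feas Umin]; split; first by rewrite subrK.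
  move=> A' E' XA.
  have [k [U [s [V sv]]]] := svd_exists A'.
  have rk := svd_rank sv; case: sv => UU VV sp eA.
  have feas' : feasU X (V *m V^T) 0 E'.
    rewrite /feasU XA addrK mul0mx addr0 {1 2}eA.
    by rewrite mulmxA -[_ *m V^T *m V]mulmxA VV mulmx1.
  have := Umin _ _ _ feas'; rewrite /objU.
  have -> : nucnorm (V *m V^T) = k%:R.
    have svV : is_skinny_svd (V *m V^T) V (const_mx 1) V.
      by split => // [i|]; rewrite ?mxE ?ltr01 // diag_const_mx mulmx1.
    by rewrite (nuc_eq svV); under eq_bigr do rewrite mxE; rewrite sumr_const card_ord.
  have -> : nucnorm (0 : 'M[R]_m) = 0.
    have sv0 : is_skinny_svd (0 : 'M[R]_m) (0 : 'M_(m, 0)) 0 0.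
      split; first (by rewrite [LHS]flatmx0 [RHS]flatmx0);
        first (by rewrite [LHS]flatmx0 [RHS]flatmx0); first by case.
      by rewrite mul0mx mul0mx.
    by rewrite (nuc_eq sv0) big_ord0.
  have mi := main_ineq feas.
  rewrite /objP rk; lra.
Qed.
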